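(* Let $k\ge 3$, and let $p,q$ be real polynomials with $\deg p=k$, $\deg q=k-1$, whose roots are real, simple and strictly interlacing, $p_1<q_1<p_2<\dots<q_{k-1}<p_k$; let $R=q/p$. Fix $j\in\{1,\dots,k-1\}$ and let $C_j^+$ be the open upper half of the circle having $[p_j,p_{j+1}]$ as a diameter. Then $R$ is injective on $C_j^+$ and $R(C_j^+)\cap\mathbb{R}=\emptyset$; hence $R(C_j^+)\cup\{\infty\}$ is a simple closed loop in $\mathbb{C}P^1$ meeting $\mathbb{R}P^1$ only at $\infty$.
   Context: Here $p_1<\dots<p_k$ are the roots of $p$ and $q_1<\dots<q_{k-1}$ the roots of $q$. *)

(* Defs.v *)
(* Complex numbers are modelled by an arbitrary
   numClosedFieldType C (e.g. algC, or the complex numbers); the reals are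
   its elements satisfying Num.real. *)
From HB Require Import structures.
From mathcomp Require Import all_boot all_order all_algebra.
Set Implicit Arguments. Unset Strict Implicit. Unset Printing Implicit Defensive.
Import Order.TTheory GRing.Theory Num.Theory.
Local Open Scope ring_scope.

Definition ratfun (C : numClosedFieldType) (p q : {poly C}) (z : C) : C :=
  q.[z] / p.[z].

Definition upper_semicircle (C : numClosedFieldType) (a b z : C) : bool :=
  (`|z - (a + b) / 2%:R| == (b - a) / 2%:R) && (0 < 'Im z).

(* Main.v *)
Require Import Defs.
From Stdlib Require Import Ring.
From HB Require Import structures.
From mathcomp Require Import all_boot all_order all_algebra.
Import Order.TTheory GRing.Theory Num.Theory.
Local Open Scope ring_scope.
Section S.
Variable C : numClosedFieldType.
Notation CT := (GRing.PzSemiRing.sort C).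
Lemma CRth : @ring_theory CT 0 1 +%R *%R (fun x y => x - y) -%R (@eq _).
Proof.
split=> //=; [exact: add0r|exact: addrC|exact: addrA|exact: mul1r|exact: mulrC|exact: mulrA|exact: mulrDl|exact: subrr].
Qed.
Add Ring CRing : CRth.
Lemma ringE (x y : CT) : 1 * x = 1 * y -> x = y.
Proof. by rewrite !mul1r. Qed.
Ltac canon :=
  repeat match goal with
  | |- context[@GRing.mul ?I] => lazymatch I with
      | Num_ClosedField__to__GRing_PzSemiRing C => fail
      | _ => change (@GRing.mul I) with (@GRing.mul (Num_ClosedField__to__GRing_PzSemiRing C)) end
  | |- context[@Algebra.add ?I] => lazymatch I with
      | GRing_PzSemiRing__to__Algebra_BaseAddMagma (Num_ClosedField__to__GRing_PzSemiRing C) => fail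
      | _ => change (@Algebra.add I) with (@Algebra.add (GRing_PzSemiRing__to__Algebra_BaseAddMagma (Num_ClosedField__to__GRing_PzSemiRing C))) end
  | |- context[@Algebra.opp ?I] => lazymatch I with
      | Num_ClosedField__to__Algebra_BaseZmodule C => fail
      | _ => change (@Algebra.opp I) with (@Algebra.opp (Num_ClosedField__to__Algebra_BaseZmodule C)) end
  end.
Ltac ring' := apply: ringE; canon; ring.

Lemma id_circ (R v a b al be : CT) : a = al + al :> CT -> b = be + be :> CT ->
  (R - (al + be)) ^+ 2 + v ^+ 2 - (be - al) ^+ 2 =
  (R - a) ^+ 2 + v ^+ 2 - (b - a) * (R - a) :> CT.
Proof. move=> -> ->; rewrite !expr2; ring'. Qed.

Lemma id_key (Rz Rw v1 v2 a b x : CT) :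
  ((Rz - x) * (Rw - x) - v1 * v2) * ((Rz - a) * v2 + (Rw - a) * v1)
  - ((Rz - a) * (Rw - a) - v1 * v2) * ((Rz - x) * v2 + (Rw - x) * v1)
  = (a - x) * (b - x) * ((Rz - a) * v2 + (Rw - a) * v1)
    + (a - x) * (v2 * ((Rz - a) ^+ 2 + v1 ^+ 2 - (b - a) * (Rz - a))
               + v1 * ((Rw - a) ^+ 2 + v2 ^+ 2 - (b - a) * (Rw - a))) :> CT.
Proof. rewrite !expr2; ring'. Qed.

Lemma id_pf (qi Pz Pzi zii lci dii : CT) :
  qi * dii * Pz * (lci * (zii * Pzi)) =
  qi * (dii * lci) * zii * (Pz * Pzi) :> CT.
Proof. ring'. Qed.

Lemma id_sub (z w x c Ai Bi : CT) :
  (w - z) * (c * (Ai * Bi)) = c * Ai * ((w - x) * Bi) - c * Bi * ((z - x) * Ai) :> CT.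
Proof. ring'. Qed.

Lemma id_c (x y u v : CT) : x * y * (u * v) = x * v * (y * u) :> CT.
Proof. ring'. Qed.

Lemma id_im1 (k e v N : CT) : k * (e * (- v * N)) = - (k * v) * (e * N) :> CT.
Proof. ring'. Qed.

Lemma id_im2 (k e ax bx I N : CT) :
  k * (e * (ax * bx * I * N)) = k * I * (e * (ax * bx) * N) :> CT.
Proof. ring'. Qed.

Lemma id_im3 (X k e Yi : CT) : X * (k * e * Yi) = k * (e * (X * Yi)) :> CT.
Proof. ring'. Qed.


Lemma horner_prodX (lc x : C) (s : seq C) :
  (lc *: \prod_(a <- s) ('X - a%:P)).[x] = lc * \prod_(l < size s) (x - s`_l).
Proof.
rewrite hornerZ horner_prod (big_nth 0) big_mkord; congr (_ * _).
by apply: eq_bigr => i _; rewrite hornerXsubC.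
Qed.

Lemma ReB_real (z a : C) : a \is Num.real -> 'Re (z - a) = 'Re z - a.
Proof. by move=> ar; rewrite raddfB /= (Creal_ReP _ ar). Qed.
Lemma ImB_real (z a : C) : a \is Num.real -> 'Im (z - a) = 'Im z.
Proof. by move=> ar; rewrite raddfB /= (Creal_ImP _ ar) subr0. Qed.

Lemma circ (a b z : C) : a \is Num.real -> b \is Num.real ->
  `|z - (a + b) / 2%:R| = (b - a) / 2%:R ->
  ('Re z - a) ^+ 2 + 'Im z ^+ 2 = (b - a) * ('Re z - a).
Proof.
move=> ar br h.
have h2 : `|z - (a + b) / 2%:R| ^+ 2 = ((b - a) / 2%:R) ^+ 2 by rewrite h.
have mr : (a + b) / 2%:R \is Num.real by rewrite rpredM ?rpredD ?rpredV ?rpred_nat.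
rewrite normC2_Re_Im ReB_real // ImB_real // mulrDl mulrBl in h2.
apply/eqP; rewrite -subr_eq0 -(id_circ ('Re z) ('Im z) _ _ _ _ (splitr a) (splitr b)).
by rewrite h2 subrr.
Qed.

Lemma key_im (a b x z w : C) : a \is Num.real -> b \is Num.real -> x \is Num.real ->
  `|z - (a + b) / 2%:R| = (b - a) / 2%:R -> `|w - (a + b) / 2%:R| = (b - a) / 2%:R ->
  'Im (((z - a) * (w - a)) / ((z - x) * (w - x))) =
  (a - x) * (b - x) * 'Im ((z - a) * (w - a)) / `|(z - x) * (w - x)| ^+ 2.
Proof.
move=> ar br xr hz hw; rewrite Im_div; congr (_ / _).
rewrite !ReM !ImM !ReB_real // !ImB_real // (id_key _ _ _ _ _ b).
have -> := circ _ _ _ ar br hz; have -> := circ _ _ _ ar br hw.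
by rewrite !subrr !(mulr0, addr0).
Qed.

Lemma semi_pos (a b z : C) : a \is Num.real -> b \is Num.real -> a < b ->
  `|z - (a + b) / 2%:R| = (b - a) / 2%:R -> 0 < 'Im z -> 0 < 'Re z - a.
Proof.
move=> ar br ab hz vz; have h := circ _ _ _ ar br hz.
have ur : 'Re z - a \is Num.real by rewrite rpredB // Creal_Re.
have : 0 < (b - a) * ('Re z - a).
  rewrite -h; apply: ltr_pwDr; first exact: exprn_gt0.
  by apply: real_exprn_even_ge0.
by rewrite pmulr_rgt0 ?subr_gt0.
Qed.

Lemma ImX_pos (a b z w : C) : a \is Num.real -> b \is Num.real -> a < b ->
  `|z - (a + b) / 2%:R| = (b - a) / 2%:R -> 0 < 'Im z ->
  `|w - (a + b) / 2%:R| = (b - a) / 2%:R -> 0 < 'Im w ->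
  0 < 'Im ((z - a) * (w - a)).
Proof.
move=> ar br ab hz vz hw vw; rewrite ImM !ReB_real // !ImB_real //.
by rewrite addr_gt0 // mulr_gt0 // (semi_pos _ _ _ ar br ab).
Qed.

Lemma lagrange (n : nat) (ps : seq C) (q : {poly C}) :
  size ps = n -> (forall i j : 'I_n, i != j -> ps`_i != ps`_j) -> (size q <= n)%N ->
  q = \sum_(i < n) (q.[ps`_i] / \prod_(l < n.-1) (ps`_i - ps`_(lift i l)))
        *: \prod_(l < n.-1) ('X - (ps`_(lift i l))%:P).
Proof.
move=> sps dist sq.
set S := \sum_(i < n) _.
have dnz : forall i : 'I_n, \prod_(l < n.-1) (ps`_i - ps`_(lift i l)) != 0.
  move=> i; apply/prodf_neq0 => l _; rewrite subr_eq0; apply: dist; exact: neq_lift.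
have Sev : forall m : 'I_n, S.[ps`_m] = q.[ps`_m].
  move=> m; rewrite /S horner_sum (bigD1 m) //= [X in _ + X]big1 ?addr0.
    rewrite hornerZ horner_prod.
    rewrite [X in _ * X](eq_bigr (fun l => ps`_m - ps`_(lift m l))); last by move=> l _; rewrite hornerXsubC.
    by rewrite divfK.
  move=> i nim; rewrite hornerZ horner_prod.
  case: (unlift_some nim) => l eql _.
  by rewrite [X in _ * X](bigD1 l) //= hornerXsubC eql subrr mul0r mulr0.
apply/eqP; rewrite -subr_eq0; apply/eqP.
apply: (@roots_geq_poly_eq0 _ _ ps).
- apply/(all_nthP 0) => m hm; rewrite /root hornerD hornerN.
  have hm' : (m < n)%N by rewrite -sps.
  by rewrite -[m]/(nat_of_ord (Ordinal hm')) Sev subrr.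
- apply/(uniqP 0) => x y; rewrite !inE sps => hx hy e.
  apply/eqP; apply: contraT => nxy.
  by have := dist (Ordinal hx) (Ordinal hy) nxy; rewrite /= e eqxx.
- rewrite sps; apply: leq_trans (size_polyD _ _) _; rewrite size_polyN geq_max sq /=.
  apply: leq_trans (size_sum _ _ _) _; apply/bigmax_leqP => i _.
  apply: leq_trans (size_scale_leq _ _) _.
  rewrite size_prod_XsubC [index_enum _]unlock -enumT size_enum_ord prednK //.
  exact: leq_ltn_trans (leq0n i) (ltn_ord i).
Qed.

Lemma pf (n : nat) (ps : seq C) (q : {poly C}) (lc z : C) :
  size ps = n -> (forall i j : 'I_n, i != j -> ps`_i != ps`_j) -> (size q <= n)%N ->
  (forall i : 'I_n, z != ps`_i) -> lc != 0 ->
  q.[z] / (lc * \prod_(i < n) (z - ps`_i)) =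
  \sum_(i < n) (q.[ps`_i] / (\prod_(l < n.-1) (ps`_i - ps`_(lift i l)) * lc)) / (z - ps`_i).
Proof.
move=> sps dist sq zn lcn.
rewrite {1}(lagrange _ _ _ sps dist sq) horner_sum mulr_suml; apply: eq_bigr => i _.
rewrite hornerZ horner_prod (bigD1_ord i) //=.
have -> : \prod_(l < n.-1) ('X - (ps`_(bump i l))%:P).[z] = \prod_(l < n.-1) (z - ps`_(bump i l)) by apply: eq_bigr => l _; rewrite hornerXsubC.
set Pz := \prod_(l < n.-1) (z - ps`_(bump i l)).
have Pzn : Pz != 0 by apply/prodf_neq0 => l _; rewrite subr_eq0; exact: (zn (lift i l)).
by rewrite !invfM id_pf (mulfV Pzn) mulr1.
Qed.

Lemma sum_pos n (F : 'I_n -> C) (i0 : 'I_n) :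
  (forall i, 0 <= F i) -> 0 < F i0 -> 0 < \sum_i F i.
Proof.
move=> h0 h1; rewrite (bigD1 i0) //=; apply: ltr_pwDl h1 _.
by apply: sumr_ge0 => i _.
Qed.

Section Order.
Variables (n : nat) (ps qs : seq C).
Hypothesis H : forall i, (i < n.-1)%N -> ps`_i < qs`_i /\ qs`_i < ps`_i.+1.

Lemma ps_lt a b : (a < b)%N -> (b < n)%N -> ps`_a < ps`_b.
Proof.
elim: b => // b IH; rewrite ltnS => ab bn.
have [h1 h2] : ps`_b < qs`_b /\ qs`_b < ps`_b.+1 by apply: H; rewrite ltn_predRL.
have hb := lt_trans h1 h2.
rewrite leq_eqVlt in ab; case/orP: ab => [/eqP -> //| ab].
exact: lt_trans (IH ab (ltnW bn)) hb.
Qed.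

Lemma qs_lt_ps l i : (l < i)%N -> (i < n)%N -> qs`_l < ps`_i.
Proof.
move=> li iN; have [_ h2] : ps`_l < qs`_l /\ qs`_l < ps`_l.+1.
  by apply: H; rewrite ltn_predRL (leq_ltn_trans li iN).
rewrite leq_eqVlt in li; case/orP: li => [/eqP <- //| li].
exact: lt_trans h2 (ps_lt _ _ li iN).
Qed.

Lemma ps_lt_qs i l : (i <= l)%N -> (l < n.-1)%N -> ps`_i < qs`_l.
Proof.
move=> il lN; have [h1 _] := H _ lN.
rewrite leq_eqVlt in il; case/orP: il => [/eqP -> //| il].
apply: lt_trans h1; apply: (ps_lt _ _ il).
by move: lN; rewrite ltn_predRL; apply: ltnW.
Qed.
End Order.

End S.
Arguments circ {C a b z}.
Arguments key_im {C a b x z w}.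
Arguments semi_pos {C a b z}.
Arguments ImX_pos {C a b z w}.
Arguments pf {C n ps q lc z}.
Arguments ps_lt {C n ps qs} H {a b}.
Arguments qs_lt_ps {C n ps qs} H {l i}.
Arguments ps_lt_qs {C n ps qs} H {i l}.
Arguments sum_pos {C n F} i0.
Arguments ReB_real {C} z {a}.
Arguments ImB_real {C} z {a}.
Arguments horner_prodX {C}.
Arguments id_sub {C}.
Arguments id_c {C}.
Arguments id_im1 {C}.
Arguments id_im2 {C}.
Arguments id_im3 {C}.


Theorem mainTheorem10 (C : numClosedFieldType) (k : nat) (p q : {poly C})
    (ps qs : seq C) (j : nat) :
  (3 <= k)%N ->
  p \is a polyOver Num.real -> q \is a polyOver Num.real ->
  size p = k.+1 -> size q = k ->
  size ps = k -> size qs = k.-1 ->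
  all (fun x => x \is Num.real) ps -> all (fun x => x \is Num.real) qs ->
  (* ps, qs are the roots of p, q (each simple, by strict interlacing) *)
  p = lead_coef p *: \prod_(a <- ps) ('X - a%:P) ->
  q = lead_coef q *: \prod_(b <- qs) ('X - b%:P) ->
  (* strict interlacing p_1 < q_1 < p_2 < ... < q_{k-1} < p_k *)
  (forall i, (i < k.-1)%N -> ps`_i < qs`_i /\ qs`_i < ps`_i.+1) ->
  (* j ranges over {1,...,k-1}, 0-indexed here *)
  (j < k.-1)%N ->
  {in upper_semicircle ps`_j ps`_j.+1 &, injective (ratfun p q)} /\
  (forall z, upper_semicircle ps`_j ps`_j.+1 z -> ratfun p q z \isn't Num.real) /\
  (q.[ps`_j] != 0 /\ q.[ps`_j.+1] != 0).
Proof.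
move=> hk pR qR sp sq sps sqs psR qsR hp hq H hj.
have k0 : (0 < k)%N by apply: leq_trans hk.
have p0 : p != 0 by rewrite -size_poly_eq0 sp.
have q0 : q != 0 by rewrite -size_poly_eq0 sq -lt0n.
have lcp0 : lead_coef p != 0 by rewrite lead_coef_eq0.
have lcq0 : lead_coef q != 0 by rewrite lead_coef_eq0.
have lcpR : lead_coef p \is Num.real by exact: (polyOverP pR).
have lcqR : lead_coef q \is Num.real by exact: (polyOverP qR).
set lcp := lead_coef p in hp lcp0 lcpR *.
set lcq := lead_coef q in hq lcq0 lcqR *.
set kap := lcq / lcp.
have kapR : kap \is Num.real by rewrite rpredM // rpredV.
have kap0 : kap != 0 by rewrite mulf_neq0 // invr_eq0.
have psr : forall i, (i < k)%N -> ps`_i \is Num.real.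
  by move=> i ik; apply: (all_nthP 0 psR); rewrite sps.
have dist : forall i i' : 'I_k, i != i' -> ps`_i != ps`_i'.
  move=> i i' ne; case: (ltngtP i i') => ii.
  - by rewrite lt_eqF // (ps_lt H ii).
  - by rewrite gt_eqF // (ps_lt H ii).
  - by move: ne; rewrite (val_inj ii) eqxx.
pose ef (i : 'I_k) := \prod_(l < k.-1) ((ps`_i - qs`_l) / (ps`_i - ps`_(lift i l))).
have epos : forall i, 0 < ef i.
  move=> i; apply: prodr_gt0 => l _.
  case: (leqP i l) => il.
    have -> : nat_of_ord (lift i l) = l.+1 by rewrite /= /bump il.
    have h1 := ps_lt_qs H il (ltn_ord l).
    have [_ h2] := H _ (ltn_ord l).
    by rewrite -divrNN divr_gt0 // oppr_gt0 subr_lt0 // (lt_trans h1 h2).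
  have -> : nat_of_ord (lift i l) = l by rewrite /= /bump leqNgt il.
  have h1 := qs_lt_ps H il (ltn_ord i).
  have [h2 _] := H _ (ltn_ord l).
  by rewrite divr_gt0 // subr_gt0 // (lt_trans h2 h1).
have ceq : forall i : 'I_k,
    q.[ps`_i] / (\prod_(l < k.-1) (ps`_i - ps`_(lift i l)) * lcp) = kap * ef i.
  move=> i; rewrite {1}hq horner_prodX sqs /ef prodf_div invfM.
  by rewrite id_c.
have zn : forall z, 0 < 'Im z -> forall i : 'I_k, z != ps`_i.
  move=> z vz i; apply/eqP => ez; move: vz.
  by rewrite ez (Creal_ImP _ (psr _ (ltn_ord i))) ltxx.
have Rz : forall z, 0 < 'Im z ->
    ratfun p q z = \sum_(i < k) kap * ef i / (z - ps`_i).
  move=> z vz; rewrite /ratfun hp horner_prodX sps.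
  rewrite (pf sps dist _ (zn z vz) lcp0); last by rewrite sq.
  by apply: eq_bigr => i _; rewrite ceq.
have qn : forall i, (i < k)%N -> q.[ps`_i] != 0.
  move=> i ik; rewrite hq horner_prodX sqs mulf_neq0 //.
  apply/prodf_neq0 => l _; case: (ltnP l i) => li.
    by rewrite subr_eq0 gt_eqF // (qs_lt_ps H li ik).
  by rewrite subr_eq0 lt_eqF // (ps_lt_qs H li (ltn_ord l)).
have hj1 : (j.+1 < k)%N by rewrite -ltn_predRL.
have hj0 : (j < k)%N by apply: ltnW.
split; last first.
  split; last by split; [exact: qn _ hj0 | exact: qn _ hj1].
  move=> z /andP[_ vz]; rewrite Rz //; apply/negP => /Creal_ImP.
  rewrite raddf_sum /=.
  rewrite (eq_bigr (fun i => - (kap * 'Im z) * (ef i / `|z - ps`_i| ^+ 2))); last first.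
    move=> i _; rewrite -mulrA ImMl // ImMl ?gtr0_real // ImV ImB_real ?psr //.
    by rewrite id_im1.
  rewrite -mulr_sumr => /eqP; rewrite mulf_eq0 oppr_eq0 mulf_eq0 (negbTE kap0) (gt_eqF vz) /=.
  apply/negP; rewrite gt_eqF //; apply: (sum_pos (Ordinal k0)).
    by move=> i; rewrite divr_ge0 ?exprn_ge0 // ltW.
  by rewrite divr_gt0 // exprn_gt0 // normr_gt0 subr_eq0 (zn z vz).
move=> z w hz0 hw0 Heq; move: hz0 hw0; rewrite /in_mem /= => /andP[/eqP hz vz] /andP[/eqP hw vw].
have ar : ps`_j \is Num.real := psr _ hj0.
have br : ps`_j.+1 \is Num.real := psr _ hj1.
have ab : ps`_j < ps`_j.+1 := ps_lt H (ltnSn j) hj1.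
set a := ps`_j in hz hw ar ab *. set b := ps`_j.+1 in hz hw br ab *.
apply/eqP; apply: contraT => nzw.
rewrite !Rz // in Heq.
have zx : forall i : 'I_k, z - ps`_i != 0 by move=> i; rewrite subr_eq0 zn.
have wx : forall i : 'I_k, w - ps`_i != 0 by move=> i; rewrite subr_eq0 zn.
have S0 : \sum_(i < k) kap * ef i / ((z - ps`_i) * (w - ps`_i)) = 0.
  have : \sum_(i < k) kap * ef i / (z - ps`_i) - \sum_(i < k) kap * ef i / (w - ps`_i) = 0.
    by rewrite Heq subrr.
  rewrite -sumrB (eq_bigr (fun i => (w - z) * (kap * ef i / ((z - ps`_i) * (w - ps`_i))))); last first.
    move=> i _; rewrite invfM (id_sub _ _ ps`_i) (mulfV (wx i)) (mulfV (zx i)).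
    by rewrite !mulr1.
  rewrite -mulr_sumr => /eqP; rewrite mulf_eq0 subr_eq0 [w == z]eq_sym (negbTE nzw) /=.
  by move/eqP.
have : 'Im ((z - a) * (w - a) * \sum_(i < k) kap * ef i / ((z - ps`_i) * (w - ps`_i))) = 0.
  by rewrite S0 mulr0 raddf0.
rewrite mulr_sumr raddf_sum /=.
rewrite (eq_bigr (fun i => kap * 'Im ((z - a) * (w - a)) *
   (ef i * ((a - ps`_i) * (b - ps`_i)) / `|(z - ps`_i) * (w - ps`_i)| ^+ 2))); last first.
  move=> i _; rewrite id_im3 ImMl // ImMl ?gtr0_real // (key_im ar br (psr _ (ltn_ord i)) hz hw).
  by rewrite id_im2.
rewrite -mulr_sumr => /eqP; rewrite mulf_eq0 mulf_eq0 (negbTE kap0).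
rewrite (gt_eqF (ImX_pos ar br ab hz vz hw vw)) /=.
rewrite gt_eqF //.
have [i0 pos0] : exists i0 : 'I_k, 0 < (a - ps`_i0) * (b - ps`_i0).
  case: (posnP j) => jj.
    exists (Ordinal hk); rewrite /= nmulr_rgt0 subr_lt0.
      by rewrite (ps_lt H _ hk) // jj.
    by rewrite (ps_lt H _ hk) // jj.
  exists (Ordinal k0); rewrite /= mulr_gt0 // subr_gt0.
    exact: (ps_lt H jj hj0).
  exact: (ps_lt H (ltn0Sn j) hj1).
apply: (sum_pos i0).
  move=> i; apply: divr_ge0; last exact: exprn_ge0 (normr_ge0 _).
  apply: mulr_ge0; first exact: ltW (epos i).
  case: (leqP i j) => ij.
    apply: mulr_ge0; rewrite subr_ge0.
      rewrite leq_eqVlt in ij; case/orP: ij => [/eqP -> //|ij].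
      exact: ltW (ps_lt H ij hj0).
    by apply: ltW; apply: (ps_lt H _ hj1).
  apply: mulr_le0; rewrite subr_le0.
    exact: ltW (ps_lt H ij (ltn_ord i)).
  rewrite leq_eqVlt in ij; case/orP: ij => [/eqP <- //|ij].
  exact: ltW (ps_lt H ij (ltn_ord i)).
apply: divr_gt0; first exact: mulr_gt0 (epos i0) pos0.
by rewrite exprn_gt0 // normr_gt0 mulf_neq0.
Qed.
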